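(* Let $\mathcal{E}$ be an ellipse with center $O$ that is not a circle. Consider the homothetic family: all triangles inscribed in $\mathcal{E}$ whose centroid is $O$, each with vertices listed counterclockwise. As $T$ ranges over this family: 1. The side length (hence also the circumradius) of the focal equilateral of $T$ is constant. 2. The centroid of the focal equilateral of $T$ lies on a fixed circle centered at $O$.
   Context: Equivalently, the homothetic family consists of the triangles inscribed in $\mathcal{E}$ and circumscribed about the ellipse that is the image of $\mathcal{E}$ under the homothety of center $O$ and ratio $1/2$. No member of this family is equilateral. It is known that over this family the sum of squared side lengths and the area are constant, and that the second isodynamic point $X_{16}$ moves on a circle centered at $O$. Hexagonal grid. Let $\zeta=e^{i\pi/3}$ and $\Lambda=\{m+n\zeta: m,n\in\mathbb{Z}\}$. Call $p,q\in\Lambda$ adjacent if $|p-q|=1$, and let $\mathcal{E}_\Lambda$ be the set of unordered pairs of adjacent lattice points. A hexagonal grid is a map $\varphi:\mathcal{E}_\Lambda\to\mathbb{C}$ such that for every $p\in\Lambda$ there exist $c_p,r_p\in\mathbb{C}$ with $\varphi(\{p,p+\zeta^k\})=c_p+r_p\zeta^k$ for $k=0,\dots,5$; these six points are the vertices of the hexagon $H_p$. Its reference triangle is $(\varphi(\{0,1\}),\varphi(\{1,\zeta\}),\varphi(\{\zeta,0\}))$. Every nondegenerate counterclockwise triangle $T=(A,B,C)$ is the reference triangle of a unique hexagonal grid. Chains and parabolas. For $p\in\Lambda$ and $e\in\{1,\zeta,\zeta^2\}$, the points $U_k=\varphi(\{p+ke,p+(k+1)e\})$, $k\in\mathbb{Z}$,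 form the vertex sequence of a chain. Chains with $e=1,\zeta^2,\zeta$ are called $A$-, $B$-, $C$-chains. Focal equilateral. By results of the paper, when $T$ is not equilateral each vertex sequence lies on a parabola, and parabolas of all $A$-chains (resp. $B$-, $C$-chains) share a focus $f_a$ (resp. $f_b$, $f_c$). The triangle $f_af_bf_c$ is equilateral with centroid $X_{16}(T)$ and squared side $\tfrac{3}{32}(a^2+b^2+c^2-2\sqrt3 S)$, where $a,b,c$ are the side lengths and $S$ is twice the area of $T$. This triangle is the focal equilateral of $T$. *)

(* Defs.v *)
From HB Require Import structures.
From mathcomp Require Import all_boot all_order all_algebra.
From mathcomp Require Import complex.
Set Implicit Arguments. Unset Strict Implicit. Unset Printing Implicit Defensive.
Import Order.TTheory GRing.Theory Num.Theory.
Local Open Scope ring_scope.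
Local Open Scope complex_scope.

Section Defs.
Variable R : rcfType.
Local Notation C := R[i].

Definition sqn (z : C) : R := complex.Re z ^+ 2 + complex.Im z ^+ 2.

(* zeta = e^{i pi/3} *)
Definition zeta : C := (1 / 2) +i* (Num.sqrt 3 / 2).

(* Lattice points m + n zeta of Lambda are encoded as pairs (m, n) of integers.
   lat_dir k is the encoding of zeta^k (k = 0..5):
   1 = (1,0), zeta = (0,1), zeta^2 = zeta - 1 = (-1,1), zeta^3 = -1 = (-1,0),
   zeta^4 = (0,-1), zeta^5 = 1 - zeta = (1,-1). *)
Definition latp := (int * int)%type.
Definition lat_add (p q : latp) : latp := (p.1 + q.1, p.2 + q.2)%R.
Definition lat_scale (k : int) (p : latp) : latp := (k * p.1, k * p.2)%R.
Definition lat_dir (k : nat) : latp :=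
  match k with
  | 0 => (1, 0) | 1 => (0, 1) | 2 => (-1, 1)
  | 3 => (-1, 0) | 4 => (0, -1) | _ => (1, -1) end%R.

(* A map on unordered pairs of adjacent lattice points is represented as a map
   phi on ordered pairs which is symmetric on adjacent pairs; the hexagonal
   grid condition: for each p there are c_p, r_p with
   phi {p, p + zeta^k} = c_p + r_p zeta^k for k = 0..5. *)
Definition hex_grid (phi : latp -> latp -> C) : Prop :=
  (forall p (k : nat), (k < 6)%N ->
     phi p (lat_add p (lat_dir k)) = phi (lat_add p (lat_dir k)) p) /\
  (forall p, exists cp rp : C, forall k : nat, (k < 6)%N ->
     phi p (lat_add p (lat_dir k)) = cp + rp * zeta ^+ k).

Definition ref_triangle (phi : latp -> latp -> C) : C * C * C :=
  (phi (0, 0)%R (1, 0)%R, phi (1, 0)%R (0, 1)%R, phi (0, 1)%R (0, 0)%R).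

Definition chain_vertex (phi : latp -> latp -> C) (p e : latp) (k : int) : C :=
  phi (lat_add p (lat_scale k e)) (lat_add p (lat_scale (k + 1) e)).

(* Parabola with focus f and directrix the line through d with direction u
   (u <> 0, f not on the directrix): z is on it iff
   |z - f| = dist(z, directrix), i.e. |z-f|^2 |u|^2 = Im(conj(u)(z-d))^2. *)
Definition on_parabola (f d u z : C) : Prop :=
  sqn (z - f) * sqn u = complex.Im ((u ^*) * (z - d)) ^+ 2.
Definition parabola_ok (f d u : C) : Prop :=
  u != 0 /\ complex.Im ((u ^*) * (f - d)) != 0.

Definition chain_focus (phi : latp -> latp -> C) (e : latp) (f : C) : Prop :=
  forall p : latp, exists d u : C, parabola_ok f d u /\
    forall k : int, on_parabola f d u (chain_vertex phi p e k).

Definition dirA : latp := (1, 0)%R.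
Definition dirB : latp := (-1, 1)%R.
Definition dirC : latp := (0, 1)%R.

Definition focal_equilateral (A B C' fa fb fc : C) : Prop :=
  exists phi : latp -> latp -> C, hex_grid phi /\
    ref_triangle phi = (A, B, C') /\
    chain_focus phi dirA fa /\ chain_focus phi dirB fb /\ chain_focus phi dirC fc.

(* Ellipse with center O, semi-axes a, b > 0 along the directions w, i*w
   (w a unit complex number). *)
Definition on_ellipse (O w : C) (a b : R) (z : C) : Prop :=
  let z' := (w ^*) * (z - O) in
  complex.Re z' ^+ 2 / a ^+ 2 + complex.Im z' ^+ 2 / b ^+ 2 = 1.

Definition ccw (A B C' : C) : Prop := 0 < complex.Im (((B - A) ^*) * (C' - A)).

Definition homothetic_member (O w : C) (a b : R) (A B C' : C) : Prop :=
  on_ellipse O w a b A /\ on_ellipse O w a b B /\ on_ellipse O w a b C' /\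
  (A + B + C') / 3%:R = O /\ ccw A B C'.

End Defs.

(* Main.v *)
Require Import Defs.
From HB Require Import structures.
From mathcomp Require Import all_boot all_order all_algebra.
From mathcomp Require Import complex ring lra.
Import Order.TTheory GRing.Theory Num.Theory.
Local Open Scope ring_scope.
Local Open Scope complex_scope.
Section T.
Variable R : rcfType.
Local Notation C := R[i].
Local Notation z := (zeta R).

Lemma s3 : Num.sqrt (3:R) ^+ 2 = 3.
Proof. by rewrite sqr_sqrtr // ler0n. Qed.

Lemma zeta2 : z ^+ 2 = z - 1.
Proof.
rewrite /zeta expr2. have h := s3.
by apply/eqP; rewrite eq_complex /=; apply/andP; split; apply/eqP; field: h.
Qed.

Lemma s3n : Num.sqrt (3:R) != 0.
Proof. by rewrite sqrtr_eq0 -ltNge ltr0n. Qed.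

Lemma zeta_neq0 : z != 0.
Proof. apply/eqP => h; have := congr1 (@complex.Im R) h; rewrite /= => /eqP.
by rewrite mulf_eq0 invr_eq0 pnatr_eq0 orbF (negbTE s3n). Qed.

Lemma zeta_neq1 : 1 - z != 0.
Proof. apply/eqP => h; have := congr1 (@complex.Im R) h; rewrite /= => /eqP.
by rewrite sub0r oppr_eq0 mulf_eq0 invr_eq0 pnatr_eq0 orbF (negbTE s3n). Qed.

Definition emb (p : latp) : C := (p.1)%:~R + (p.2)%:~R * z.

Lemma emb_add p q : emb (lat_add p q) = emb p + emb q.
Proof. by case: p q => [p1 p2] [q1 q2]; rewrite /emb /lat_add /= !intrD; ring. Qed.

Lemma emb_dir k : (k < 6)%N -> emb (lat_dir k) = z ^+ k.
Proof.
have h := zeta2.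
by case: k => [|[|[|[|[|[|//]]]]]] _; rewrite /emb /=; ring: h.
Qed.

Lemma lat_back q i : (i < 6)%N -> lat_add (lat_add q (lat_dir i)) (lat_dir ((i + 3) %% 6)) = q.
Proof.
by case: q => [q1 q2]; case: i => [|[|[|[|[|[|//]]]]]] _; rewrite /lat_add /=; congr pair; ring.
Qed.

Lemma zpow3 i : (i < 6)%N -> z ^+ ((i + 3) %% 6) = - z ^+ i.
Proof. have h := zeta2.
by case: i => [|[|[|[|[|[|//]]]]]] _ /=; ring: h. Qed.

Lemma zpowS i : (i < 6)%N -> z ^+ (i.+1 %% 6) = z ^+ i * z.
Proof. have h := zeta2.
by case: i => [|[|[|[|[|[|//]]]]]] _ /=; ring: h. Qed.

Lemma quartic_real (x1 x2 y1 y2 m1 m2 Q : R) : Q != 0 -> (m1 != 0) || (m2 != 0) ->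
  (x1 + y1 * (-2) + m1 * (-2)^+2)^+2 = 2 * Q * (x2 + y2 * (-2) + m2 * (-2)^+2) + Q^+2 ->
  (x1 + y1 * (-1) + m1 * (-1)^+2)^+2 = 2 * Q * (x2 + y2 * (-1) + m2 * (-1)^+2) + Q^+2 ->
  x1^+2 = 2 * Q * x2 + Q^+2 ->
  (x1 + y1 * 1 + m1 * 1^+2)^+2 = 2 * Q * (x2 + y2 * 1 + m2 * 1^+2) + Q^+2 ->
  (x1 + y1 * 2 + m1 * 2^+2)^+2 = 2 * Q * (x2 + y2 * 2 + m2 * 2^+2) + Q^+2 ->
  m1 = 0 /\ 2 * x1 * m2 = y1 * y2 /\ 4 * x2 * m2 = y2^+2 - y1^+2.
Proof.
move=> hQ hm Em2 Em1 E0 E1 E2.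
have hm1 : m1 ^+ 2 = 0 by lra.
have m10 : m1 = 0 by apply/eqP; rewrite -sqrf_eq0 hm1.
subst m1. rewrite eqxx /= in hm.
have H2 : y1^+2 = 2 * Q * m2 by lra.
have H1 : x1 * y1 = Q * y2 by lra.
have H0 : 2 * Q * x2 = x1^+2 - Q^+2 by lra.
have y1n : y1 != 0.
  apply/eqP=> y10; move: H2; rewrite y10 expr2 mul0r => /esym/eqP.
  by rewrite !mulf_eq0 (negbTE hQ) (negbTE hm) /= pnatr_eq0.
split => //; split.
- apply: (mulIf y1n). apply: (mulIf hQ).
  have e : 2 * x1 * m2 * y1 * Q = x1 * (2 * Q * m2) * y1 by ring.
  rewrite e -H2. have e' : y1 * y2 * y1 * Q = y1 * (Q * y2) * y1 by ring.
  by rewrite e' -H1; ring.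
- have hn : Q * y1^+2 != 0 by rewrite mulf_neq0 // sqrf_eq0.
  apply: (mulIf hn).
  have e : 4 * x2 * m2 * (Q * y1 ^+ 2) = 2 * m2 * y1^+2 * (2 * Q * x2) by ring.
  rewrite e H0.
  have e2 : 2 * m2 * y1 ^+ 2 * (x1 ^+ 2 - Q ^+ 2) = 2 * m2 * ((x1 * y1)^+2 - Q^+2 * y1^+2) by ring.
  rewrite e2 H1.
  have e3 : 2 * m2 * ((Q * y2) ^+ 2 - Q ^+ 2 * y1 ^+ 2) = Q * (2 * Q * m2) * (y2^+2 - y1^+2) by ring.
  by rewrite e3 -H2; ring.
Qed.

Lemma parab_eq (f d u z : C) : on_parabola f d u z ->
  let W := u^* * (z - f) in let Q := complex.Im (u^* * (f - d)) in
  complex.Re W ^+ 2 = 2 * Q * complex.Im W + Q ^+ 2.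
Proof.
rewrite /on_parabola /sqn /= => H.
have e1 : sqn (z - f) * sqn u = complex.Re (u^* * (z - f)) ^+ 2 + complex.Im (u^* * (z - f)) ^+ 2.
  by case: z f u {H} => [z1 z2] [f1 f2] [u1 u2]; rewrite /sqn /=; ring.
have e2 : complex.Im (u^* * (z - d)) = complex.Im (u^* * (z - f)) + complex.Im (u^* * (f - d)).
  by case: z f u d {H e1} => [z1 z2] [f1 f2] [u1 u2] [d1 d2] /=; ring.
rewrite /sqn in e1. rewrite e1 e2 in H. lra.
Qed.

Lemma cpx_ex (x : C) : exists a b, x = a +i* b.
Proof. by case: x => a b; exists a, b. Qed.

Lemma focus_unique (f d u al be ga : C) :
  parabola_ok f d u -> ga != 0 ->
  on_parabola f d u (al - be *+ 2 + ga *+ 4) ->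
  on_parabola f d u (al - be + ga) ->
  on_parabola f d u al ->
  on_parabola f d u (al + be + ga) ->
  on_parabola f d u (al + be *+ 2 + ga *+ 4) ->
  f = al - be ^+ 2 / (4%:R * ga).
Proof.
move=> [un0 hQ] gn0 /parab_eq Em2 /parab_eq Em1 /parab_eq E0 /parab_eq E1 /parab_eq E2.
move: Em2 Em1 E0 E1 E2.
set Q := complex.Im (u^* * (f - d)).
have [x1 [x2 eX]] := cpx_ex (u^* * (al - f)).
have [y1 [y2 eY]] := cpx_ex (u^* * be).
have [m1 [m2 eM]] := cpx_ex (u^* * ga).
have ek : forall k : C, u^* * (al + be * k + ga * k^+2 - f) = u^* * (al - f) + u^* * be * k + u^* * ga * k^+2.
  by move=> k; ring.
have gen : forall k : R, u^* * (al + be * k%:C + ga * (k^+2)%:C - f) =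
   (x1 + y1*k + m1*k^+2) +i* (x2 + y2*k + m2*k^+2).
  move=> k.
  have -> : u^* * (al + be * k%:C + ga * (k^+2)%:C - f) = u^* * (al - f) + u^* * be * k%:C + u^* * ga * (k^+2)%:C by ring.
  rewrite eX eY eM /=; apply/eqP; rewrite eq_complex /=; apply/andP; split; apply/eqP; ring.
have p2 : al - be *+ 2 + ga *+ 4 = al + be * (-2)%:C + ga * ((-2)^+2)%:C.
  by rewrite rmorphN; ring.
have p1 : al - be + ga = al + be * (-1)%:C + ga * ((-1) ^+ 2)%:C by rewrite rmorphN; ring.
have p0 : al = al + be * 0%:C + ga * (0 ^+ 2)%:C by ring.
have p1' : al + be + ga = al + be * 1%:C + ga * (1 ^+ 2)%:C by ring.
have p2' : al + be *+ 2 + ga *+ 4 = al + be * 2%:C + ga * (2 ^+ 2)%:C by ring.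
move=> Em2 Em1 E0 E1 E2.
rewrite p2 gen /= -/Q in Em2. rewrite p1 gen /= -/Q in Em1. rewrite p1' gen /= -/Q in E1.
rewrite p2' gen /= -/Q in E2. rewrite eX /= -/Q in E0.
have Mn : (m1 != 0) || (m2 != 0).
  rewrite -negb_and; apply/negP => /andP [/eqP h1 /eqP h2].
  move: eM; rewrite h1 h2 => /eqP; rewrite mulf_eq0 conjc_eq0 (negbTE un0) (negbTE gn0) //.
have [m10 [h1 h2]] := quartic_real _ _ _ _ _ _ _ hQ Mn Em2 Em1 E0 E1 E2.
have key : u^* * (al - f) * ((4:R)%:C * (u^* * ga)) = (u^* * be) ^+ 2.
  rewrite eX eY eM m10 /=; apply/eqP; rewrite eq_complex /=; apply/andP; split; apply/eqP.
    lra.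
  lra.
have un' : u^* != 0 by rewrite conjc_eq0.
have key2 : (al - f) * (4%:R * ga) = be ^+ 2.
  apply: (mulfI (mulf_neq0 un' un')).
  rewrite -[LHS]/((u^* * u^*) * ((al - f) * (4%:R * ga))).
  have -> : ((u^* * u^*) * ((al - f) * (4%:R * ga))) = u^* * (al - f) * ((4%:R) * (u^* * ga)) by ring.
  rewrite -(rmorph_nat (real_complex R)) key; ring.
rewrite -key2; field.
exact gn0.
Qed.

Section Grid.
Variables (A B C' : C).
Definition c0 := (1 - z) * A + z * C'.
Definition r0 := z * (A - C').
Definition gg := - A + (1 - z) * B + z * C'.
Definition Vf (P e : C) : C := c0 + r0 * (2%:R * P + e) + gg * P * (P + e).

Lemma V_sym P e : Vf (P + e) (- e) = Vf P e.
Proof. rewrite /Vf; ring. Qed.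

Definition Good (phi : latp -> latp -> C) q :=
  forall k, (k < 6)%N -> phi q (lat_add q (lat_dir k)) = Vf (emb q) (z ^+ k).

Lemma solve_hex phi q i (cq rq : C) : (i < 6)%N ->
  (forall k, (k < 6)%N -> phi q (lat_add q (lat_dir k)) = cq + rq * z ^+ k) ->
  phi q (lat_add q (lat_dir i)) = Vf (emb q) (z ^+ i) ->
  phi q (lat_add q (lat_dir (i.+1 %% 6))) = Vf (emb q) (z ^+ (i.+1 %% 6)) ->
  Good phi q.
Proof.
move=> hi Hq e1 e2.
have i1 : (i.+1 %% 6 < 6)%N by rewrite ltn_mod.
rewrite Hq // in e1; rewrite Hq // zpowS // in e2.
set Q := emb q in e1 e2 *.
have hr : rq = r0 + gg * Q.
  have e3 : (rq - (r0 + gg * Q)) * (z ^+ i * (1 - z)) = 0.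
    have -> : (rq - (r0 + gg * Q)) * (z ^+ i * (1 - z)) = (cq + rq * z^+i) - (cq + rq * (z^+i * z)) - (Vf Q (z^+i) - Vf Q (z^+i * z)) by rewrite /Vf; ring.
    by rewrite e1 e2 subrr.
  have nz : z ^+ i * (1 - z) != 0 by rewrite mulf_neq0 ?expf_neq0 ?zeta_neq0 ?zeta_neq1.
  by move/eqP: e3; rewrite mulf_eq0 (negbTE nz) orbF subr_eq0 => /eqP.
have hc : cq = c0 + 2%:R * r0 * Q + gg * Q ^+ 2.
  apply/eqP; rewrite -(subr_eq0 _ (_ + _)); apply/eqP.
  have -> : cq - (c0 + 2%:R * r0 * Q + gg * Q ^+ 2) = (cq + rq * z^+i) - Vf Q (z ^+ i) - (rq - (r0 + gg * Q)) * z ^+ i by rewrite /Vf; ring.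
  by rewrite e1 hr !subrr mul0r subr0.
move=> k hk; rewrite Hq // hc hr /Vf /Q; ring.
Qed.

Lemma prop_hex phi q i q1 q2 : hex_grid phi -> (i < 6)%N ->
  q1 = lat_add q (lat_dir i) -> q2 = lat_add q (lat_dir (i.+1 %% 6)) ->
  Good phi q1 -> Good phi q2 -> Good phi q.
Proof.
move=> [Hs Hh] hi e1 e2 G1 G2.
have [cq [rq Hq]] := Hh q.
have i1 : (i.+1 %% 6 < 6)%N by rewrite ltn_mod.
have edge : forall j q', (j < 6)%N -> q' = lat_add q (lat_dir j) -> Good phi q' ->
   phi q (lat_add q (lat_dir j)) = Vf (emb q) (z ^+ j).
  move=> j q' hj eq' G'.
  have j3 : ((j + 3) %% 6 < 6)%N by rewrite ltn_mod.
  have e : phi q (lat_add q (lat_dir j)) = phi q' (lat_add q' (lat_dir ((j+3)%%6))).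
    by rewrite Hs // eq' lat_back.
  rewrite e G' // eq' emb_add emb_dir // zpow3 //.
  exact: V_sym.
apply: (@solve_hex phi q i cq rq hi Hq); [exact: edge e1 G1 | exact: edge e2 G2].
Qed.


Lemma good_edge phi q j q' : Good phi q -> (j < 6)%N -> q' = lat_add q (lat_dir j) ->
  phi q q' = Vf (emb q) (z ^+ j).
Proof. by move=> G hj ->; apply: G. Qed.

Lemma grid_good phi : hex_grid phi -> ref_triangle phi = (A, B, C') ->
  [/\ [/\ Good phi (-2,0)%R, Good phi (-1,0)%R, Good phi (0,0)%R, Good phi (1,0)%R & Good phi (2,0)%R],
      [/\ Good phi (2,-2)%R, Good phi (1,-1)%R, Good phi (-1,1)%R & Good phi (-2,2)%R] &
      [/\ Good phi (0,-2)%R, Good phi (0,-1)%R, Good phi (0,1)%R & Good phi (0,2)%R]].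
Proof.
move=> Hg Hr; have [Hs Hh] := Hg.
case: Hr => eA eB eC.
have h := zeta2.
have G0_0 : Good phi (0,0)%R.
  have [cq [rq Hq]] := Hh (0,0)%R.
  apply: (@solve_hex phi (0,0)%R 0 cq rq isT Hq).
    by rewrite [LHS]eA /Vf /emb /c0 /r0 /=; ring.
  rewrite [LHS](Hs (0,0)%R 1%N isT) [LHS]eC /Vf /emb /c0 /r0 /=; ring: h.
have G1_0 : Good phi (1,0)%R.
  have [cq [rq Hq]] := Hh (1,0)%R.
  apply: (@solve_hex phi (1,0)%R 2 cq rq isT Hq).
    by rewrite [LHS]eB /Vf /emb /c0 /r0 /gg /=; ring: h.
  by rewrite [LHS](Hs (1,0)%R 3%N isT) [LHS]eA /Vf /emb /c0 /r0 /gg /=; ring: h.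
have G0_1 : Good phi (0,1)%R.
  have [cq [rq Hq]] := Hh (0,1)%R.
  apply: (@solve_hex phi (0,1)%R 4 cq rq isT Hq).
    by rewrite [LHS]eC /Vf /emb /c0 /r0 /gg /=; ring: h.
  by rewrite [LHS](Hs (0,1)%R 5%N isT) [LHS]eB /Vf /emb /c0 /r0 /gg /=; ring: h.
have Gm1_1 : Good phi (-1, 1)%R := @prop_hex phi (-1, 1)%R 5 (0, 0)%R (0, 1)%R Hg isT erefl erefl G0_0 G0_1.
have Gm1_0 : Good phi (-1, 0)%R := @prop_hex phi (-1, 0)%R 0 (0, 0)%R (-1, 1)%R Hg isT erefl erefl G0_0 Gm1_1.
have G0_m1 : Good phi (0, -1)%R := @prop_hex phi (0, -1)%R 1 (0, 0)%R (-1, 0)%R Hg isT erefl erefl G0_0 Gm1_0.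
have G1_m1 : Good phi (1, -1)%R := @prop_hex phi (1, -1)%R 1 (1, 0)%R (0, 0)%R Hg isT erefl erefl G1_0 G0_0.
have Gm2_1 : Good phi (-2, 1)%R := @prop_hex phi (-2, 1)%R 5 (-1, 0)%R (-1, 1)%R Hg isT erefl erefl Gm1_0 Gm1_1.
have Gm2_0 : Good phi (-2, 0)%R := @prop_hex phi (-2, 0)%R 0 (-1, 0)%R (-2, 1)%R Hg isT erefl erefl Gm1_0 Gm2_1.
have Gm2_2 : Good phi (-2, 2)%R := @prop_hex phi (-2, 2)%R 4 (-2, 1)%R (-1, 1)%R Hg isT erefl erefl Gm2_1 Gm1_1.
have Gm1_m1 : Good phi (-1, -1)%R := @prop_hex phi (-1, -1)%R 0 (0, -1)%R (-1, 0)%R Hg isT erefl erefl G0_m1 Gm1_0.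
have Gm1_2 : Good phi (-1, 2)%R := @prop_hex phi (-1, 2)%R 3 (-2, 2)%R (-1, 1)%R Hg isT erefl erefl Gm2_2 Gm1_1.
have G0_m2 : Good phi (0, -2)%R := @prop_hex phi (0, -2)%R 1 (0, -1)%R (-1, -1)%R Hg isT erefl erefl G0_m1 Gm1_m1.
have G0_2 : Good phi (0, 2)%R := @prop_hex phi (0, 2)%R 3 (-1, 2)%R (0, 1)%R Hg isT erefl erefl Gm1_2 G0_1.
have G1_m2 : Good phi (1, -2)%R := @prop_hex phi (1, -2)%R 1 (1, -1)%R (0, -1)%R Hg isT erefl erefl G1_m1 G0_m1.
have G1_1 : Good phi (1, 1)%R := @prop_hex phi (1, 1)%R 2 (0, 2)%R (0, 1)%R Hg isT erefl erefl G0_2 G0_1.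
have G2_m2 : Good phi (2, -2)%R := @prop_hex phi (2, -2)%R 2 (1, -1)%R (1, -2)%R Hg isT erefl erefl G1_m1 G1_m2.
have G2_0 : Good phi (2, 0)%R := @prop_hex phi (2, 0)%R 2 (1, 1)%R (1, 0)%R Hg isT erefl erefl G1_1 G1_0.

by split; split.
Qed.

Lemma focus_dir phi f (de : latp) (e Pm2 Pm1 P0 P1 P2 : C) :
  e != 0 -> gg != 0 ->
  chain_vertex phi (0,0)%R de (-2) = Vf Pm2 e -> Pm2 = - (2%:R * e) ->
  chain_vertex phi (0,0)%R de (-1) = Vf Pm1 e -> Pm1 = - e ->
  chain_vertex phi (0,0)%R de 0 = Vf P0 e -> P0 = 0 ->
  chain_vertex phi (0,0)%R de 1 = Vf P1 e -> P1 = e ->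
  chain_vertex phi (0,0)%R de 2 = Vf P2 e -> P2 = 2%:R * e ->
  chain_focus phi de f -> f = c0 - r0 ^+ 2 / gg - gg * e ^+ 2 / 4%:R.
Proof.
move=> en gn cm2 em2 cm1 em1 c0' e0 c1 e1 c2 e2 Hf.
have [d [u [ok Hp]]] := Hf (0,0)%R.
set al := c0 + r0 * e; set be := 2%:R * r0 * e + gg * e ^+ 2; set ga := gg * e ^+ 2.
have gan : ga != 0 by rewrite mulf_neq0 // expf_neq0.
have := Hp (-2); rewrite cm2 em2 => Hm2.
have := Hp (-1); rewrite cm1 em1 => Hm1.
have := Hp 0; rewrite c0' e0 => H0.
have := Hp 1; rewrite c1 e1 => H1.
have := Hp 2; rewrite c2 e2 => H2.
have -> : f = al - be ^+ 2 / (4%:R * ga).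
  apply: (@focus_unique f d u al be ga ok gan).
  - by move: Hm2; congr on_parabola; rewrite /Vf /al /be /ga; ring.
  - by move: Hm1; congr on_parabola; rewrite /Vf /al /be /ga; ring.
  - by move: H0; congr on_parabola; rewrite /Vf /al /be /ga; ring.
  - by move: H1; congr on_parabola; rewrite /Vf /al /be /ga; ring.
  - by move: H2; congr on_parabola; rewrite /Vf /al /be /ga; ring.
rewrite /al /be /ga; field.
by rewrite gn en.
Qed.

Lemma focus_all phi fa fb fc : hex_grid phi -> ref_triangle phi = (A, B, C') -> gg != 0 ->
  chain_focus phi dirA fa -> chain_focus phi dirB fb -> chain_focus phi dirC fc ->
  [/\ fa = c0 - r0 ^+ 2 / gg - gg / 4%:R,
      fb = c0 - r0 ^+ 2 / gg - gg * z ^+ 4 / 4%:R &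
      fc = c0 - r0 ^+ 2 / gg - gg * z ^+ 2 / 4%:R].
Proof.
move=> Hg Hr gn HA HB HC.
have h := zeta2.
have [[Gm2_0 Gm1_0 G0_0 G1_0 G2_0] [G2_m2 G1_m1 Gm1_1 Gm2_2] [G0_m2 G0_m1 G0_1 G0_2]] := @grid_good phi Hg Hr.
have zn : forall j, z ^+ j != 0 by move=> j; rewrite expf_neq0 // zeta_neq0.
split.
- rewrite (@focus_dir phi fa dirA (z ^+ 0) (emb (-2,0)%R) (emb (-1,0)%R) (emb (0,0)%R) (emb (1,0)%R) (emb (2,0)%R) (zn 0%N) gn
    (@good_edge phi (-2,0)%R 0 _ Gm2_0 isT erefl) _
    (@good_edge phi (-1,0)%R 0 _ Gm1_0 isT erefl) _
    (@good_edge phi (0,0)%R 0 _ G0_0 isT erefl) _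
    (@good_edge phi (1,0)%R 0 _ G1_0 isT erefl) _
    (@good_edge phi (2,0)%R 0 _ G2_0 isT erefl) _ HA); rewrite /emb /=; try ring.
- rewrite (@focus_dir phi fb dirB (z ^+ 2) (emb (2,-2)%R) (emb (1,-1)%R) (emb (0,0)%R) (emb (-1,1)%R) (emb (-2,2)%R) (zn 2%N) gn
    (@good_edge phi (2,-2)%R 2 _ G2_m2 isT erefl) _
    (@good_edge phi (1,-1)%R 2 _ G1_m1 isT erefl) _
    (@good_edge phi (0,0)%R 2 _ G0_0 isT erefl) _
    (@good_edge phi (-1,1)%R 2 _ Gm1_1 isT erefl) _
    (@good_edge phi (-2,2)%R 2 _ Gm2_2 isT erefl) _ HB); rewrite /emb /=; try ring: h.
- rewrite (@focus_dir phi fc dirC (z ^+ 1) (emb (0,-2)%R) (emb (0,-1)%R) (emb (0,0)%R) (emb (0,1)%R) (emb (0,2)%R) (zn 1%N) gn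
    (@good_edge phi (0,-2)%R 1 _ G0_m2 isT erefl) _
    (@good_edge phi (0,-1)%R 1 _ G0_m1 isT erefl) _
    (@good_edge phi (0,0)%R 1 _ G0_0 isT erefl) _
    (@good_edge phi (0,1)%R 1 _ G0_1 isT erefl) _
    (@good_edge phi (0,2)%R 1 _ G0_2 isT erefl) _ HC); rewrite /emb /=; try ring: h.
Qed.

End Grid.
Lemma recon (o1 o2 w1 w2 a1 a2 a b : R) : a != 0 -> b != 0 -> w1 ^+ 2 + w2 ^+ 2 = 1 ->
  let x := (w1 * (a1 - o1) + w2 * (a2 - o2)) / a in
  let y := (w1 * (a2 - o2) - w2 * (a1 - o1)) / b in
  a1 = o1 + w1 * (a * x) - w2 * (b * y) /\ a2 = o2 + w2 * (a * x) + w1 * (b * y).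
Proof.
move=> an bn hw x y; rewrite /x /y; split.
  have -> : o1 + w1 * (a * ((w1 * (a1 - o1) + w2 * (a2 - o2)) / a)) -
    w2 * (b * ((w1 * (a2 - o2) - w2 * (a1 - o1)) / b)) = o1 + (a1 - o1) * (w1^+2 + w2^+2) by field; apply/andP.
  by rewrite hw; ring.
have -> : o2 + w2 * (a * ((w1 * (a1 - o1) + w2 * (a2 - o2)) / a)) +
    w1 * (b * ((w1 * (a2 - o2) - w2 * (a1 - o1)) / b)) = o2 + (a2 - o2) * (w1^+2 + w2^+2) by field; apply/andP.
by rewrite hw; ring.
Qed.

Lemma param (O w : C) (a b : R) A B C' : 0 < a -> 0 < b -> sqn w = 1 ->
  homothetic_member O w a b A B C' ->
  exists E : C, sqn E = 1 /\
    A = O + w * (((a+b)/2)%:C * E + ((a-b)/2)%:C * E^*) /\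
    B = O + w * (((a+b)/2)%:C * z^+2 * E - ((a-b)/2)%:C * z * E^*) /\
    C' = O + w * (- ((a+b)/2)%:C * z * E + ((a-b)/2)%:C * z^+2 * E^*).
Proof.
move=> ha hb hw [eA [eB [eC [ecen hccw]]]].
have an : a != 0 by rewrite gt_eqF.
have bn : b != 0 by rewrite gt_eqF.
have hsum : A + B + C' = (3:R)%:C * O.
  by rewrite -ecen rmorph_nat; field.
move: eA eB eC hccw hsum hw; clear ecen; rewrite /on_ellipse /ccw /sqn.
case: O w A B C' => [o1 o2] [w1 w2] [a1 a2] [b1 b2] [c1 c2] /= eA eB eC hccw hsum hw.
have [s1 s2] : a1 + b1 + c1 = 3 * o1 /\ a2 + b2 + c2 = 3 * o2.
  by move/eqP: hsum; rewrite eq_complex /= => /andP [/eqP h1 /eqP h2]; split; lra.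
have [ra1 ra2] := recon o1 o2 w1 w2 a1 a2 a b an bn hw.
have [rb1 rb2] := recon o1 o2 w1 w2 b1 b2 a b an bn hw.
have [rc1 rc2] := recon o1 o2 w1 w2 c1 c2 a b an bn hw.
set x := (w1 * (a1 - o1) + w2 * (a2 - o2)) / a in ra1 ra2.
set y := (w1 * (a2 - o2) - w2 * (a1 - o1)) / b in ra1 ra2.
set x2 := (w1 * (b1 - o1) + w2 * (b2 - o2)) / a in rb1 rb2.
set y2 := (w1 * (b2 - o2) - w2 * (b1 - o1)) / b in rb1 rb2.
set x3 := (w1 * (c1 - o1) + w2 * (c2 - o2)) / a in rc1 rc2.
set y3 := (w1 * (c2 - o2) - w2 * (c1 - o1)) / b in rc1 rc2.
have ux : x ^+ 2 + y ^+ 2 = 1 by rewrite -eA /x /y; field; apply/andP.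
have ux2 : x2 ^+ 2 + y2 ^+ 2 = 1 by rewrite -eB /x2 /y2; field; apply/andP.
have ux3 : x3 ^+ 2 + y3 ^+ 2 = 1 by rewrite -eC /x3 /y3; field; apply/andP.
have sx : x3 = - x - x2.
  have -> : x3 = (w1 * (c1 - o1) + w2 * (c2 - o2)) / a by [].
  have -> : c1 = 3 * o1 - a1 - b1 by lra.
  have -> : c2 = 3 * o2 - a2 - b2 by lra.
  by rewrite /x /x2; field.
have sy : y3 = - y - y2.
  have -> : y3 = (w1 * (c2 - o2) - w2 * (c1 - o1)) / b by [].
  have -> : c1 = 3 * o1 - a1 - b1 by lra.
  have -> : c2 = 3 * o2 - a2 - b2 by lra.
  by rewrite /y /y2; field.
have ecc : (b1 - a1) * (c2 - a2) + - (b2 - a2) * (c1 - a1) = a * b * (3 * (x * y2 - y * x2)).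
  rewrite ra1 ra2 rb1 rb2 rc1 rc2 sx sy.
  have -> : a * b * (3 * (x * y2 - y * x2)) = a * b * (3 * (x * y2 - y * x2)) * (w1^+2 + w2^+2) by rewrite hw mulr1.
  ring.
have cpos : 0 < x * y2 - y * x2.
  have hab : 0 < a * b by rewrite mulr_gt0.
  by move: hccw; rewrite ecc pmulr_rgt0 // pmulr_rgt0 // ltr0n.
have dot : x * x2 + y * y2 = - (1/2).
  move: ux3; rewrite sx sy => h3. lra.
have cc2 : (x * y2 - y * x2) ^+ 2 = (Num.sqrt 3 / 2) ^+ 2.
  have -> : (x * y2 - y * x2) ^+ 2 = (x^+2 + y^+2) * (x2^+2 + y2^+2) - (x * x2 + y * y2) ^+ 2 by ring.
  by rewrite ux ux2 dot expr_div_n s3; field.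
have cr : x * y2 - y * x2 = Num.sqrt 3 / 2.
  apply/eqP; rewrite -(@eqrXn2 _ 2) //; first by rewrite cc2.
    exact: ltW.
  by rewrite divr_ge0 ?sqrtr_ge0.
have hx2 : x2 = - x / 2 - Num.sqrt 3 / 2 * y.
  rewrite -cr; have -> : - x / 2 = (x * x2 + y * y2) * x by rewrite dot; field.
  have e : (x * x2 + y * y2) * x - (x * y2 - y * x2) * y = x2 * (x ^+ 2 + y ^+ 2) by ring.
  by rewrite e ux mulr1.
have hy2 : y2 = Num.sqrt 3 / 2 * x - y / 2.
  rewrite -cr; have -> : - (y / 2) = (x * x2 + y * y2) * y by rewrite dot; field.
  have e : (x * y2 - y * x2) * x + (x * x2 + y * y2) * y = y2 * (x ^+ 2 + y ^+ 2) by ring.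
  by rewrite e ux mulr1.
exists (x +i* y); split; first by [].
have h := zeta2.
have SA : ((a + b) / 2)%:C * (x +i* y) + ((a - b) / 2)%:C * (x +i* y)^* = (a * x) +i* (b * y).
  by apply/eqP; rewrite eq_complex /=; apply/andP; split; apply/eqP; field.
have SB : ((a + b) / 2)%:C * z ^+ 2 * (x +i* y) - ((a - b) / 2)%:C * z * (x +i* y)^* = (a * x2) +i* (b * y2).
  rewrite h /zeta hx2 hy2.
  by apply/eqP; rewrite eq_complex /=; apply/andP; split; apply/eqP; field.
have SC : - ((a + b) / 2)%:C * z * (x +i* y) + ((a - b) / 2)%:C * z ^+ 2 * (x +i* y)^* = (a * x3) +i* (b * y3).
  rewrite h /zeta sx sy hx2 hy2.
  by apply/eqP; rewrite eq_complex /=; apply/andP; split; apply/eqP; field.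
rewrite SA SB SC; split; last split.
- by apply/eqP; rewrite eq_complex /= {1}ra1 {1}ra2; apply/andP; split; apply/eqP; ring.
- by apply/eqP; rewrite eq_complex /= {1}rb1 {1}rb2; apply/andP; split; apply/eqP; ring.
- by apply/eqP; rewrite eq_complex /= {1}rc1 {1}rc2; apply/andP; split; apply/eqP; ring.
Qed.

Lemma sqnM (x y : C) : sqn (x * y) = sqn x * sqn y.
Proof. by case: x y => [x1 x2] [y1 y2]; rewrite /sqn /=; ring. Qed.
Lemma sqnN (x : C) : sqn (- x) = sqn x.
Proof. by case: x => [x1 x2]; rewrite /sqn /=; ring. Qed.
Lemma sqn_conj (x : C) : sqn x^* = sqn x.
Proof. by case: x => [x1 x2]; rewrite /sqn /=; ring. Qed.
Lemma sqnC (k : R) : sqn k%:C = k ^+ 2.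
Proof. by rewrite /sqn /=; ring. Qed.
Lemma mul_conj (x : C) : x * x^* = (sqn x)%:C.
Proof. by case: x => [x1 x2]; apply/eqP; rewrite eq_complex /sqn /=; apply/andP; split; apply/eqP; ring. Qed.
Lemma sqn1_neq0 (x : C) : sqn x = 1 -> x != 0.
Proof. by move=> h; apply/eqP => x0; move: h; rewrite x0 /sqn /= expr0n addr0 => /eqP; rewrite eq_sym oner_eq0. Qed.
Lemma conj_inv (x : C) : sqn x = 1 -> x^* = x^-1.
Proof.
move=> h; have xn := @sqn1_neq0 x h.
by apply: (mulfI xn); rewrite mul_conj h divff.
Qed.
Lemma sqn_z1 : sqn (z + 1) = 3.
Proof. by rewrite /sqn /zeta /=; have h := s3; field: h. Qed.
Lemma sqn_z2 : sqn (2%:R * z - 1) = 3.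
Proof. by rewrite /sqn /zeta /=; have h := s3; field: h. Qed.
Lemma sqn_z3 : sqn (2%:R - z) = 3.
Proof. by rewrite /sqn /zeta /=; have h := s3; field: h. Qed.
End T.

Theorem mainTheorem18 (R : rcfType) (O w : R[i]) (a b : R) :
  0 < a -> 0 < b -> a != b -> sqn w = 1 ->
  exists s r : R,
    forall A B C fa fb fc : R[i],
      homothetic_member O w a b A B C ->
      focal_equilateral A B C fa fb fc ->
      (sqn (fa - fb) = s /\ sqn (fb - fc) = s /\ sqn (fc - fa) = s) /\
      sqn ((fa + fb + fc) / 3%:R - O) = r ^+ 2.
Proof.
move=> ha hb hab hw.
set p := (a + b) / 2; set q := (a - b) / 2.
have qn : q != 0 by rewrite /q mulf_neq0 ?subr_eq0 // invr_eq0 pnatr_eq0.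
exists (27 / 16 * q ^+ 2), (p ^+ 2 / q).
move=> A B C fa fb fc hm [phi [Hg [Hr [HA [HB HC]]]]].
have [E [hE [eA [eB eC]]]] := @param R O w a b A B C ha hb hw hm.
have h := @zeta2 R.
have wn := @sqn1_neq0 R w hw.
have En := @sqn1_neq0 R E hE.
have Ebn : E^* != 0 by rewrite conjc_eq0.
have qCn : q%:C != 0 by rewrite (inj_eq (@complexI R)) ?qn.
have gE : gg R A B C = - 3%:R * q%:C * w * E^*.
  by rewrite /gg eA eB eC -/p -/q; ring: h.
have gn : gg R A B C != 0.
  by rewrite gE !mulf_neq0 // oppr_eq0 pnatr_eq0.
have [efa efb efc] := @focus_all R A B C phi fa fb fc Hg Hr gn HA HB HC.
rewrite -/p -/q in eA eB eC.
clearbody p q.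
have eEb : Num.conj E = E^-1 by exact: (@conj_inv R E hE).
split; last first.
  have cen : (fa + fb + fc) / 3%:R - O = (- (p ^+ 2 / q))%:C * w * E ^+ 3.
    rewrite efa efb efc /c0 /r0 gE eA eC eEb.
    rewrite rmorphN; field: h.
    by rewrite qCn En wn.
  have sc3 : sqn (E ^+ 3) = 1 by rewrite !exprS expr0 !sqnM hE /sqn /=; ring.
  by rewrite cen sqnM sc3 sqnM sqnC hw; ring.
have sc : sqn (Num.conj E) = 1 by exact: (etrans (@sqn_conj R E) hE).
have d1 : fa - fb = (3 / 4 * q)%:C * w * Num.conj E * (zeta R + 1).
  by rewrite efa efb gE rmorphM; field: h; rewrite qCn Ebn wn.
have d2 : fb - fc = - (3 / 4 * q)%:C * w * Num.conj E * (2%:R * zeta R - 1).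
  by rewrite efb efc gE rmorphM; field: h; rewrite qCn Ebn wn.
have d3 : fc - fa = - (3 / 4 * q)%:C * w * Num.conj E * (2%:R - zeta R).
  by rewrite efa efc gE rmorphM; field: h; rewrite qCn Ebn wn.
rewrite d1 d2 d3 !sqnM sqnN ?sqnC hw sc sqn_z1 sqn_z2 sqn_z3.
by split; last split; field.
Qed.
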